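(* Let $S_0$ be a classical-quantum program, $\sigma_0$ a classical state and $r\ge 0$ an integer, and let $\mathcal{T}$ be an $r$-fault transition tree starting with $(S_0,\sigma_0)$. Then the map $\mathcal{E}_{\mathcal{T}}:\rho\mapsto \sum_{\langle\downarrow,\sigma,\rho'\rangle\in\mathcal{T}(\rho)}\rho'$ (sum over all leaf nodes of $\mathcal{T}(\rho)$) is well defined (the possibly infinite sum converges) and is a quantum channel, i.e. a completely positive, trace-non-increasing linear map (not necessarily trace-preserving).
   Context: Programs. Fix qubits $q_1,\dots,q_N$. A classical-quantum program (cq-prog) is generated by the grammar $S ::= S_1;S_2 \mid q:=|0\rangle \mid U(\bar q)\mid x:=\mathtt{measure}\ q \mid x:=e \mid \mathtt{if}\ b\ \mathtt{then}\ S_1\ \mathtt{else}\ S_2 \mid y:=f(x) \mid \mathtt{repeat}\ S\ \mathtt{until}\ b$, where $q$ is a qubit, $\bar q$ a list of distinct qubits, $U$ a unitary on $\bar q$, $x,y$ classical variables, $e$ a classical expression, $b$ a Boolean expression and $f$ a classical function. A configuration is a triple $\langle S,\sigma,\rho\rangle$ where $\sigma$ maps classical variables to values, $\rho$ is a partial density operator (positive semidefinite, trace $\le 1$) on the $N$ qubits, and $S$ is a program or the terminated program $\downarrow$ (with $\downarrow;S=S$). For an operator $A$ on qubits $\bar q$, $A_{\bar q}$ denotes $A$ on $\bar q$ tensored with the identity elsewhere, and $|i\rangle_q\langle j|$ denotes $|i\rangle\langle j|$ on qubit $q$. Ideal transitions $\to$: (IN) $\langle q:=|0\rangle,\sigma,\rho\rangle\to\langle\downarrow,\sigma,|0\rangle_q\langle0|\rho|0\rangle_q\langle0|+|0\rangle_q\langle1|\rho|1\rangle_q\langle0|\rangle$;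 (UT) $\langle U(\bar q),\sigma,\rho\rangle\to\langle\downarrow,\sigma,U_{\bar q}\rho U_{\bar q}^\dagger\rangle$; (M0) $\langle x:=\mathtt{measure}\ q,\sigma,\rho\rangle\to\langle\downarrow,\sigma[0/x],|0\rangle_q\langle0|\rho|0\rangle_q\langle0|\rangle$ and (M1) the same with $1$ in place of $0$; (AS) $\langle x:=e,\sigma,\rho\rangle\to\langle\downarrow,\sigma[\sigma(e)/x],\rho\rangle$; (CO) $\langle y:=f(x),\sigma,\rho\rangle\to\langle\downarrow,\sigma[f(\sigma(x))/y],\rho\rangle$; (SC) if $\langle S_1,\sigma,\rho\rangle\to\langle S_1',\sigma',\rho'\rangle$ then $\langle S_1;S_2,\sigma,\rho\rangle\to\langle S_1';S_2,\sigma',\rho'\rangle$; (CT)/(CF) $\langle \mathtt{if}\ b\ \mathtt{then}\ S_1\ \mathtt{else}\ S_2,\sigma,\rho\rangle$ goes to $\langle S_1,\sigma,\rho\rangle$ if $\sigma\models b$ and to $\langle S_2,\sigma,\rho\rangle$ otherwise; (RU) $\langle\mathtt{repeat}\ S\ \mathtt{until}\ b,\sigma,\rho\rangle\to\langle S;\mathtt{if}\ b\ \mathtt{then}\ \downarrow\ \mathtt{else}\ \{\mathtt{repeat}\ S\ \mathtt{until}\ b\},\sigma,\rho\rangle$. Faulty transitions $\leadsto$ (only quantum statements can be faulty; there is also the analogous sequencing rule): (F-IN) $\langle q:=|0\rangle,\sigma,\rho\rangle\leadsto\langle\downarrow,\sigma,\mathcal{E}_q(\rho)\rangle$ and (F-UT)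 $\langle U(\bar q),\sigma,\rho\rangle\leadsto\langle\downarrow,\sigma,\mathcal{E}_{\bar q}(\rho)\rangle$, with $\mathcal{E}_q,\mathcal{E}_{\bar q}$ arbitrary trace-preserving completely positive maps acting nontrivially only on $q$ (resp. $\bar q$); (F-M0)/(F-M1) $\langle x:=\mathtt{measure}\ q,\sigma,\rho\rangle\leadsto\langle\downarrow,\sigma[c/x],\mathcal{E}_{c,q}(\rho)\rangle$ for $c\in\{0,1\}$, with $\mathcal{E}_{c,q}$ arbitrary completely positive maps acting nontrivially only on $q$. Transition trees. For a program $S_0$, classical state $\sigma_0$ and integer $r\ge0$, an $r$-fault transition tree starting with $(S_0,\sigma_0)$ is a (possibly infinite) rooted tree whose nodes are configurations such that: the root is $\langle S_0,\sigma_0,\widetilde\rho\rangle$ with $\widetilde\rho$ an indeterminate quantum state; a node is a leaf iff its program is $\downarrow$; a node whose program begins with a measurement $x:=\mathtt{measure}\ q$ has exactly two children, generated either by (M0) and (M1), or by (F-M0) and (F-M1) with $\mathcal{E}_{0,q}+\mathcal{E}_{1,q}$ trace-preserving; every other non-leaf node has exactly one child obtained by one ideal or faulty transition; every path contains at most $r$ faulty transitions. $\mathcal{T}(\rho_0)$ denotes the tree obtained by substituting the concrete state $\rho_0$ for $\widetilde\rho$. *)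

(* Defs.v *)
From mathcomp Require Import all_boot all_algebra.
From mathcomp Require Import complex.
From mathcomp Require Import reals.
Set Implicit Arguments. Unset Strict Implicit. Unset Printing Implicit Defensive.
Import GRing.Theory Num.Theory.
Local Open Scope ring_scope.

Section QDefs.
Variable R : realType.
Notation C := (R[i]).

Definition op (I : finType) := I -> I -> C.

Definition op0 {I : finType} : op I := fun _ _ => 0.
Definition op1 {I : finType} : op I := fun x y => (x == y)%:R.
Definition opadd {I : finType} (A B : op I) : op I := fun x y => A x y + B x y.
Definition opscale {I : finType} (a : C) (A : op I) : op I := fun x y => a * A x y.
Definition opmul {I : finType} (A B : op I) : op I :=
  fun x y => \sum_(z : I) A x z * B z y.
Definition adj {I : finType} (A : op I) : op I := fun x y => (A y x)^*.
Definition trace {I : finType} (A : op I) : C := \sum_(x : I) A x x.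

Definition psd {I : finType} (A : op I) : Prop :=
  forall v : I -> C, 0 <= \sum_(x : I) \sum_(y : I) (v x)^* * A x y * v y.

Definition unitary {I : finType} (U : op I) : Prop :=
  opmul U (adj U) = op1 /\ opmul (adj U) U = op1.

Definition linear_map {I J : finType} (E : op I -> op J) : Prop :=
  forall (a : C) (A B : op I), E (opadd (opscale a A) B) = opadd (opscale a (E A)) (E B).

(* id_k (x) E, acting blockwise on operators of I * 'I_k *)
Definition ampl {I J : finType} (k : nat) (E : op I -> op J) (X : op (I * 'I_k)%type)
  : op (J * 'I_k)%type :=
  fun xi yj => E (fun a b => X (a, xi.2) (b, yj.2)) xi.1 yj.1.

Definition completely_positive {I J : finType} (E : op I -> op J) : Prop :=
  forall (k : nat) (X : op (I * 'I_k)%type), psd X -> psd (ampl E X).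

Definition trace_preserving {I J : finType} (E : op I -> op J) : Prop :=
  forall A : op I, trace (E A) = trace A.

(* N qubits: computational basis = {ffun 'I_N -> bool}                 *)
Variable N : nat.
Definition basis (k : nat) := {ffun 'I_k -> bool}.
Notation B := (basis N).

Definition restrict {k} (qs : k.-tuple 'I_N) (x : B) : basis k :=
  [ffun i => x (tnth qs i)].

(* basis state equal to a on qs and to x elsewhere *)
Definition merge {k} (qs : k.-tuple 'I_N) (a : basis k) (x : B) : B :=
  [ffun j => if [pick i | tnth qs i == j] is Some i then a i else x j].

(* A_qs : operator A on the qubits qs tensored with the identity elsewhere *)
Definition liftop {k} (qs : k.-tuple 'I_N) (A : op (basis k)) : op B :=
  fun x y => A (restrict qs x) (restrict qs y) *
             [forall j, (j \notin qs) ==> (x j == y j)]%:R.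

(* E_qs : superoperator E on the qubits qs tensored with id elsewhere *)
Definition liftmap {k} (qs : k.-tuple 'I_N) (E : op (basis k) -> op (basis k))
  (rho : op B) : op B :=
  fun x y => E (fun a b => rho (merge qs a x) (merge qs b y))
               (restrict qs x) (restrict qs y).

Definition ketbra (i j : bool) : op (basis 1) :=
  fun a b => ((a ord0 == i) && (b ord0 == j))%:R.

Definition kb (q : 'I_N) (i j : bool) : op B := liftop [tuple q] (ketbra i j).

Definition var := nat.
Definition value := nat.
Definition cstate := var -> value.
Definition upd (s : cstate) (x : var) (v : value) : cstate :=
  fun z => if z == x then v else s z.

Inductive prog : Type :=
| PTerm                                     (* the terminated program "down" *)
| PSeq (S1 S2 : prog)
| PInit (q : 'I_N)                          (* q := |0> *)
| PUnit (k : nat) (qs : k.-tuple 'I_N) (U : op (basis k))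
| PMeas (x : var) (q : 'I_N)
| PAssign (x : var) (e : cstate -> value)
| PIf (b : cstate -> bool) (S1 S2 : prog)
| PFun (y x : var) (f : value -> value)
| PRepeat (P : prog) (b : cstate -> bool).  (* repeat S until b *)

Fixpoint wf_prog (P : prog) : Prop :=
  match P with
  | PTerm => False
  | PSeq S1 S2 => wf_prog S1 /\ wf_prog S2
  | PInit _ => True
  | PUnit k qs U => uniq qs /\ unitary U
  | PMeas _ _ => True
  | PAssign _ _ => True
  | PIf _ S1 S2 => wf_prog S1 /\ wf_prog S2
  | PFun _ _ _ => True
  | PRepeat P _ => wf_prog P
  end.

(* sequencing with the convention down;S = S *)
Definition pseq (S1 S2 : prog) : prog :=
  if S1 is PTerm then S2 else PSeq S1 S2.

Definition init_map (q : 'I_N) (rho : op B) : op B :=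
  opadd (opmul (kb q false false) (opmul rho (kb q false false)))
        (opmul (kb q false true) (opmul rho (kb q true false))).

Definition unit_map {k} (qs : k.-tuple 'I_N) (U : op (basis k)) (rho : op B) : op B :=
  opmul (liftop qs U) (opmul rho (adj (liftop qs U))).

Definition meas_map (q : 'I_N) (c : bool) (rho : op B) : op B :=
  opmul (kb q c c) (opmul rho (kb q c c)).

Definition local_cp {k} (qs : k.-tuple 'I_N) (M : op B -> op B) : Prop :=
  exists E : op (basis k) -> op (basis k),
    [/\ linear_map E, completely_positive E & M = liftmap qs E].

Definition local_cptp {k} (qs : k.-tuple 'I_N) (M : op B -> op B) : Prop :=
  exists E : op (basis k) -> op (basis k),
    [/\ linear_map E, completely_positive E, trace_preserving E & M = liftmap qs E].

(* one non-measurement transition <S,s,rho> -> <S',s',M rho>; the bool flag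
   says whether the transition is faulty (~>) or ideal (->). *)
Inductive step1 : prog -> cstate -> prog -> cstate -> (op B -> op B) -> bool -> Prop :=
| st_IN q s : step1 (PInit q) s PTerm s (init_map q) false
| st_FIN q s M : local_cptp [tuple q] M -> step1 (PInit q) s PTerm s M true
| st_UT k qs U s : step1 (@PUnit k qs U) s PTerm s (unit_map qs U) false
| st_FUT k qs U s M : local_cptp qs M -> step1 (@PUnit k qs U) s PTerm s M true
| st_AS x e s : step1 (PAssign x e) s PTerm (upd s x (e s)) id false
| st_CO y x f s : step1 (PFun y x f) s PTerm (upd s y (f (s x))) id false
| st_CT (b : cstate -> bool) S1 S2 s : b s -> step1 (PIf b S1 S2) s S1 s id false
| st_CF (b : cstate -> bool) S1 S2 s : ~~ b s -> step1 (PIf b S1 S2) s S2 s id false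
| st_RU P b s : step1 (PRepeat P b) s (PSeq P (PIf b PTerm (PRepeat P b))) s id false
| st_SC S1 S2 s S1' s' M f :
    step1 S1 s S1' s' M f -> step1 (PSeq S1 S2) s (pseq S1' S2) s' M f.

Fixpoint head_meas (P : prog) : option (var * 'I_N) :=
  match P with
  | PMeas x q => Some (x, q)
  | PSeq S1 _ => head_meas S1
  | _ => None
  end.

Fixpoint meas_cont (P : prog) : prog :=
  match P with
  | PMeas _ _ => PTerm
  | PSeq S1 S2 => pseq (meas_cont S1) S2
  | _ => P
  end.

(* A node: its program, classical state, its quantum state as a function
   of the indeterminate initial state rho~, and whether the transition
   from its parent to it is faulty. *)
Record node := Node {
  nprog : prog;
  nst : cstate;
  nq : op B -> op B;
  nfault : bool }.

(* A (possibly infinite) tree with nodes addressed by paths from the root;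
   the children of the node at p are at rcons p false and rcons p true. *)
Definition tree := seq bool -> option node.

Definition is_leaf (n : node) : bool := if nprog n is PTerm then true else false.

Definition nfaults (t : tree) (p : seq bool) : nat :=
  \sum_(i < size p) (if t (take i.+1 p) is Some n then nfault n else false).

Definition is_fault_tree (r : nat) (S0 : prog) (s0 : cstate) (t : tree) : Prop :=
  [/\ t [::] = Some (Node S0 s0 id false),
      (forall p b, t p = None -> t (rcons p b) = None),
      (forall p n, t p = Some n ->
         if is_leaf n then (forall b, t (rcons p b) = None)
         else if head_meas (nprog n) is Some (x, q) then
           (* measurement: two children, by (M0),(M1) or by (F-M0),(F-M1) *)
           (   (forall c : bool, t (rcons p c) =
                  Some (Node (meas_cont (nprog n)) (upd (nst n) x c)
                             (meas_map q c \o nq n) false))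
            \/ (exists M0 M1 : op B -> op B,
                  [/\ local_cp [tuple q] M0, local_cp [tuple q] M1,
                      (forall rho, trace (opadd (M0 rho) (M1 rho)) = trace rho) &
                      forall c : bool, t (rcons p c) =
                        Some (Node (meas_cont (nprog n)) (upd (nst n) x c)
                                   ((if c then M1 else M0) \o nq n) true)]))
         else
           t (rcons p true) = None /\
           exists n', t (rcons p false) = Some n' /\
             exists M, step1 (nprog n) (nst n) (nprog n') (nst n') M (nfault n')
                       /\ nq n' = M \o nq n) &
      (forall p n, t p = Some n -> nfaults t p <= r)%N ].

(* the state at leaf p of T(rho) (0 if p is not a leaf of T) *)
Definition leafval (t : tree) (rho : op B) (p : seq bool) : op B :=
  if t p is Some n then (if is_leaf n then nq n rho else op0) else op0.

(* unordered (possibly infinite) summation of a family of operators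
   indexed by paths: the finite partial sums converge (entrywise) to L *)
Definition has_sum (f : seq bool -> op B) (L : op B) : Prop :=
  forall eps : C, 0 < eps ->
    exists s0 : seq (seq bool), forall s : seq (seq bool),
      uniq s -> {subset s0 <= s} ->
      forall x y, `| \sum_(p <- s) f p x y - L x y | < eps.

End QDefs.

(* Main.v *)
Require Import Defs.
From mathcomp Require Import all_boot all_order all_algebra.
From mathcomp Require Import complex.
From mathcomp Require Import reals classical_sets.
From Stdlib Require Import FunctionalExtensionality IndefiniteDescription.
From mathcomp Require Import ring.
Import Order.TTheory GRing.Theory Num.Theory.
Local Open Scope ring_scope.
Set Implicit Arguments. Unset Strict Implicit. Unset Printing Implicit Defensive.

Lemma sum_sub_le (V : numDomainType) (T : eqType) (g : T -> V) s1 s2 :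
  (forall p, 0 <= g p) -> uniq s1 -> uniq s2 -> {subset s1 <= s2} ->
  \sum_(p <- s1) g p <= \sum_(p <- s2) g p.
Proof.
move=> g0 u1 u2 sub.
rewrite [X in _ <= X](bigID (fun x => x \in s1)) /=.
have <- : \sum_(i <- [seq i <- s2 | i \in s1]) g i = \sum_(p <- s1) g p.
  apply: perm_big; apply: uniq_perm; first exact: filter_uniq.
    done.
  by move=> x; rewrite mem_filter; case hx: (x \in s1) => //=; rewrite sub.
by rewrite big_filter lerDl sumr_ge0.
Qed.

Section Sc.
Variable R : realType.
Notation C := (R[i]).

Definition hs (T : eqType) (f : T -> C) (l : C) :=
  forall eps : C, 0 < eps -> exists s0 : seq T, forall s, uniq s -> {subset s0 <= s} ->
    `|\sum_(p <- s) f p - l| < eps.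

Variable T : eqType.

Lemma hs_ext (f g : T -> C) l : f =1 g -> hs f l -> hs g l.
Proof.
move=> fg H eps e0; case: (H _ e0) => s0 Hs; exists s0 => s us sub.
by rewrite -(eq_bigr _ (fun p _ => fg p)); apply: Hs.
Qed.

Lemma hs_add (f g : T -> C) a b : hs f a -> hs g b -> hs (fun p => f p + g p) (a + b).
Proof.
move=> Hf Hg eps e0; have e2 : 0 < eps / 2 by rewrite divr_gt0.
case: (Hf _ e2) => s1 H1; case: (Hg _ e2) => s2 H2.
exists (s1 ++ s2) => s us sub.
have h1 : `|\sum_(p <- s) f p - a| < eps / 2.
  by apply: H1 => // x hx; apply: sub; rewrite mem_cat hx.
have h2 : `|\sum_(p <- s) g p - b| < eps / 2.
  by apply: H2 => // x hx; apply: sub; rewrite mem_cat hx orbT.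
rewrite big_split /=.
have -> : \sum_(i <- s) f i + \sum_(i <- s) g i - (a + b) =
   (\sum_(i <- s) f i - a) + (\sum_(i <- s) g i - b) by rewrite addrACA opprD.
by rewrite (splitr eps); apply: le_lt_trans (ler_normD _ _) (ltrD h1 h2).
Qed.

Lemma hs_scale c (f : T -> C) a : hs f a -> hs (fun p => c * f p) (c * a).
Proof.
move=> Hf eps e0.
have hc : 0 < `|c| + 1 by rewrite ltr_wpDl.
case: (Hf (eps / (`|c| + 1))); first by rewrite divr_gt0.
move=> s0 H; exists s0 => s us sub; have h := H s us sub.
rewrite -mulr_sumr -mulrBr normrM.
apply: (@le_lt_trans _ _ ((`|c| + 1) * `|\sum_(p <- s) f p - a|)).
  by rewrite ler_wpM2r // lerDl.
by rewrite mulrC -ltr_pdivlMr.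
Qed.

Lemma hs0 : hs (fun _ : T => 0) 0.
Proof. by move=> eps e0; exists [::] => s _ _; rewrite big1 // subr0 normr0. Qed.

Lemma hs_sum (K : Type) (ks : seq K) (F : K -> T -> C) (L : K -> C) :
  (forall k, hs (F k) (L k)) ->
  hs (fun p => \sum_(k <- ks) F k p) (\sum_(k <- ks) L k).
Proof.
move=> H; elim: ks => [|k ks IH].
  by rewrite big_nil; apply: hs_ext hs0 => p; rewrite big_nil.
rewrite big_cons; apply: hs_ext (hs_add (H k) IH) => p; by rewrite big_cons.
Qed.

Lemma hs_unique (f : T -> C) a b : hs f a -> hs f b -> a = b.
Proof.
move=> Ha Hb; apply/eqP; rewrite -subr_eq0 -normr_eq0; have [//|ne] := eqVneq `|a - b| 0.
have e0 : 0 < `|a - b| / 2 by rewrite divr_gt0 // lt_def ne normr_ge0.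
case: (Ha _ e0) => s1 H1; case: (Hb _ e0) => s2 H2.
set s := undup (s1 ++ s2).
have us : uniq s by apply: undup_uniq.
have h1 : `|\sum_(p <- s) f p - a| < `|a - b| / 2.
  by apply: H1 => // x hx; rewrite mem_undup mem_cat hx.
have h2 : `|\sum_(p <- s) f p - b| < `|a - b| / 2.
  by apply: H2 => // x hx; rewrite mem_undup mem_cat hx orbT.
have : `|a - b| < `|a - b| / 2 + `|a - b| / 2.
  have E : a - b = - (\sum_(p <- s) f p - a) + (\sum_(p <- s) f p - b)
    by rewrite opprB addrA subrK.
  rewrite {1}E.
  apply: le_lt_trans (ler_normD _ _) _; rewrite normrN; exact: ltrD.
by rewrite -splitr ltxx.
Qed.

Lemma hs_common (J : finType) (F : J -> T -> C) (L : J -> C) :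
  (forall j, hs (F j) (L j)) -> forall eps, 0 < eps ->
  exists s0 : seq T, forall s : seq T, uniq s -> {subset s0 <= s} ->
    forall j, `|\sum_(p <- s) F j p - L j| < eps.
Proof.
move=> H eps e0.
suff [s0 Hs] : exists s0 : seq T, forall s : seq T, uniq s -> {subset s0 <= s} ->
    forall j, j \in enum J -> `|\sum_(p <- s) F j p - L j| < eps.
  by exists s0 => s us sub j; apply: Hs => //; rewrite mem_enum.
elim: (enum J) => [|j js [s1 IH]]; first by exists [::].
case: (H j _ e0) => s2 H2; exists (s1 ++ s2) => s us sub i; rewrite inE.
case/orP=> [/eqP -> | hi].
  by apply: H2 => // x hx; apply: sub; rewrite mem_cat hx orbT.
by apply: IH => // x hx; apply: sub; rewrite mem_cat hx.
Qed.

End Sc.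

Lemma ge0_closed (V : numFieldType) (l : V) :
  (forall eps, 0 < eps -> exists z, 0 <= z /\ `|l - z| < eps) -> 0 <= l.
Proof.
move=> H.
suff : `|l - `|l| | == 0 by rewrite normr_eq0 subr_eq0 => /eqP ->.
have [//|ne] := eqVneq `|l - `|l| | 0.
have e0 : 0 < `|l - `|l| | / 2 by rewrite divr_gt0 // lt_def ne normr_ge0.
case: (H _ e0) => z [z0 hz].
have : `|l - `|l| | < `|l - `|l| | / 2 + `|l - `|l| | / 2.
  have E : l - `|l| = (l - z) + (`|z| - `|l|) by rewrite (ger0_norm z0) addrA subrK.
  rewrite {1}E.
  apply: le_lt_trans (ler_normD _ _) _; apply: ltrD => //.
  apply: le_lt_trans (ler_dist_dist _ _) _; by rewrite distrC.
by rewrite -splitr ltxx.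
Qed.

Section B.
Variable R : realType.
Notation C := (R[i]).

Lemma ge0_real (z : C) : 0 <= z -> z = ((complex.Re z)%:C)%C.
Proof.
rewrite lecE => /andP [/eqP /= hi _].
by rewrite {1}[z]complexE hi raddf0 mulr0 addr0.
Qed.

Lemma hs_nonneg (T : eqType) (f : T -> C) (M : C) :
  (forall p, 0 <= f p) -> (forall s, uniq s -> \sum_(p <- s) f p <= M) ->
  exists l, hs f l.
Proof.
move=> f0 fM.
pose g p := complex.Re (f p).
have fg p : f p = ((g p)%:C)%C by apply: ge0_real.
have g0 p : 0 <= g p by have := f0 p; rewrite lecE => /andP [_].
have sg s : \sum_(p <- s) f p = ((\sum_(p <- s) g p)%:C)%C.
  by rewrite raddf_sum; apply: eq_bigr => p _; rewrite fg.
pose E : set R := fun x => exists s, uniq s /\ x = \sum_(p <- s) g p.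
have hE : has_sup E.
  split; first by exists 0; exists [::]; rewrite big_nil.
  exists (complex.Re M) => x [s [us ->]].
  by have := fM s us; rewrite sg lecE => /andP [_].
exists ((sup E)%:C)%C => eps e0.
have er : 0 < complex.Re eps by move: e0; rewrite ltcE => /andP [_].
have epsE : eps = ((complex.Re eps)%:C)%C by apply: ge0_real; apply: ltW.
case: (sup_adherent er hE) => e [s0 [us0 ->]] he.
exists s0 => s us sub.
have h1 : \sum_(p <- s0) g p <= \sum_(p <- s) g p by apply: sum_sub_le.
have h2 : \sum_(p <- s) g p <= sup E by apply: sup_upper_bound => //; exists s.
rewrite sg -raddfB -normrN -raddfN opprB ger0_norm; last by rewrite ler0c subr_ge0.
rewrite [X in _ < X]epsE ltcR ltrBlDr -ltrBlDl.
exact: lt_le_trans he h1.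
Qed.

End B.

Section C.
Variable R : realType.
Notation C := (R[i]).

Lemma opext (I : finType) (A B : op R I) : (forall x y, A x y = B x y) -> A = B.
Proof.
move=> H; apply: functional_extensionality => x; apply: functional_extensionality => y.
exact: H.
Qed.

Lemma psd_ext (I : finType) (A B : op R I) : (forall x y, A x y = B x y) -> psd A -> psd B.
Proof. by move=> /opext ->. Qed.

Lemma sum_delta (I : finType) (c : I) (G : I -> C) :
  \sum_a (c == a)%:R * G a = G c.
Proof.
rewrite (bigD1 c) //= eqxx mul1r big1 ?addr0 // => a ha.
by rewrite eq_sym (negbTE ha) mul0r.
Qed.

Lemma sum_deltar (I : finType) (c : I) (G : I -> C) :
  \sum_a G a * (c == a)%:R = G c.
Proof. by rewrite -(sum_delta c G); apply: eq_bigr => a _; rewrite mulrC. Qed.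

Lemma psd_congr (I J : finType) (L : J -> I -> C) (X : op R I) :
  psd X -> psd (fun p q => \sum_a \sum_b L p a * X a b * (L q b)^*).
Proof.
move=> H v.
have := H (fun a => \sum_q (L q a)^* * v q).
set lhs := (X in 0 <= X -> _); set rhs := (X in _ -> 0 <= X).
suff -> : lhs = rhs by [].
have e1 : forall a, (\sum_q (L q a)^* * v q)^* = \sum_p L p a * (v p)^*.
  by move=> a; rewrite rmorph_sum /=; apply: eq_bigr => p _; rewrite rmorphM /= conjCK.
have eL : lhs = \sum_a \sum_b \sum_p \sum_q
     (L p a * (v p)^*) * X a b * ((L q b)^* * v q).
  rewrite /lhs; apply: eq_bigr => a _; apply: eq_bigr => b _.
  rewrite !e1 mulr_suml mulr_suml; apply: eq_bigr => p _.
  by rewrite mulr_sumr.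
have eR : rhs = \sum_p \sum_q \sum_a \sum_b
     (v p)^* * (L p a * X a b * (L q b)^*) * v q.
  rewrite /rhs; apply: eq_bigr => p _; apply: eq_bigr => q _.
  rewrite mulr_sumr mulr_suml; apply: eq_bigr => a _.
  by rewrite mulr_sumr mulr_suml.
rewrite eL eR.
rewrite exchange_big /=.
under eq_bigr => b _ do rewrite exchange_big /=.
rewrite exchange_big /=.
apply: eq_bigr => p _.
under eq_bigr => a _ do rewrite exchange_big /=.
rewrite exchange_big /=.
apply: eq_bigr => q _.
rewrite exchange_big /=.
apply: eq_bigr => a _; apply: eq_bigr => b _.
by ring.
Qed.


Lemma sum_pair (I J : finType) (G : I * J -> C) :
  \sum_(p : I * J) G p = \sum_i \sum_j G (i, j).
Proof. by rewrite pair_bigA; apply: eq_bigr => [[i j]] _. Qed.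

Lemma sum_pair_delta (I : finType) k (c : 'I_k) (G : I * 'I_k -> C) :
  \sum_(a : I * 'I_k) (c == a.2)%:R * G a = \sum_z G (z, c).
Proof. by rewrite sum_pair; apply: eq_bigr => z _; rewrite (sum_delta c (fun j => G (z, j))). Qed.

Lemma psd_pull (I J : finType) (f : J -> I) (X : op R I) :
  psd X -> psd (fun p q => X (f p) (f q)).
Proof.
move=> /(psd_congr (fun p a => (f p == a)%:R)); apply: psd_ext => p q.
rewrite (eq_bigr (fun a => (f p == a)%:R * \sum_b X a b * (f q == b)%:R)).
  by rewrite sum_delta sum_deltar.
by move=> a _; rewrite mulr_sumr; apply: eq_bigr => b _; rewrite conjC_nat mulrA.
Qed.

Definition quad (I : finType) (A : op R I) (v : I -> C) :=
  \sum_x \sum_y (v x)^* * A x y * v y.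

Lemma psd_add (I : finType) (A B : op R I) : psd A -> psd B -> psd (opadd A B).
Proof.
move=> hA hB v.
have -> : \sum_x \sum_y (v x)^* * opadd A B x y * v y =
   (\sum_x \sum_y (v x)^* * A x y * v y) + (\sum_x \sum_y (v x)^* * B x y * v y).
  rewrite -big_split; apply: eq_bigr => x _; rewrite -big_split; apply: eq_bigr => y _.
  rewrite /opadd /=; ring.
exact: addr_ge0.
Qed.

Lemma psd0 (I : finType) : psd (@op0 R I).
Proof. by move=> v; rewrite big1 // => x _; rewrite big1 // => y _; rewrite /op0 mulr0 mul0r. Qed.

Lemma cp_comp (I : finType) (M1 M2 : op R I -> op R I) :
  completely_positive M1 -> completely_positive M2 -> completely_positive (M1 \o M2).
Proof. by move=> h1 h2 k X hX; exact: (h1 k _ (h2 k X hX)). Qed.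

Lemma cp_add (I : finType) (M1 M2 : op R I -> op R I) :
  completely_positive M1 -> completely_positive M2 ->
  completely_positive (fun rho => opadd (M1 rho) (M2 rho)).
Proof. by move=> h1 h2 k X hX; exact: (psd_add (h1 k X hX) (h2 k X hX)). Qed.

Lemma cp_id (I : finType) : completely_positive (@id (op R I)).
Proof. by move=> k X; apply: psd_ext => [[x i] [y j]]. Qed.

Lemma cp_zero (I : finType) : completely_positive (fun _ : op R I => @op0 R I).
Proof. by move=> k X _; exact: psd0. Qed.

Lemma cp_psd (I : finType) (M : op R I -> op R I) rho :
  completely_positive M -> psd rho -> psd (M rho).
Proof.
move=> hM hr.
pose X : op R (I * 'I_1)%type := fun p q => rho p.1 q.1.
have hX : psd X := psd_pull (fun p : (I * 'I_1)%type => p.1) hr.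
have := psd_pull (fun x => (x, ord0)) (hM 1%N X hX).
by apply: psd_ext.
Qed.

Lemma cp_conj (I : finType) (A : op R I) :
  completely_positive (fun rho => opmul A (opmul rho (adj A))).
Proof.
move=> k X hX.
have := psd_congr (fun (p a : I * 'I_k) => A p.1 a.1 * (p.2 == a.2)%:R) hX.
apply: psd_ext => p q; rewrite /ampl /opmul /adj /=.
transitivity (\sum_(a : I * 'I_k) (p.2 == a.2)%:R *
   (A p.1 a.1 * \sum_(b : I * 'I_k) (q.2 == b.2)%:R * (X a b * (A q.1 b.1)^*))).
  apply: eq_bigr => a _; rewrite mulr_sumr mulr_sumr; apply: eq_bigr => b _.
  rewrite rmorphM /= conjC_nat; ring.
rewrite sum_pair_delta; apply: eq_bigr => z _; congr (_ * _).
by rewrite sum_pair_delta.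
Qed.

End C.

Section D.
Variable R : realType.
Notation C := (R[i]).
Variable N : nat.
Notation B := (basis N).
Local Notation restrict := Defs.restrict.
Local Notation merge := Defs.merge.

Definition agr k (qs : k.-tuple 'I_N) (x y : B) :=
  [forall j, (j \notin qs) ==> (x j == y j)].

Lemma restrict_merge k (qs : k.-tuple 'I_N) a x :
  uniq qs -> restrict qs (merge qs a x) = a.
Proof.
move=> /tuple_uniqP inj; apply/ffunP => i; rewrite !ffunE.
case: pickP => [i' /eqP h | hn]; first by rewrite (inj _ _ h).
by have := hn i; rewrite eqxx.
Qed.

Lemma agr_merge k (qs : k.-tuple 'I_N) a x : agr qs x (merge qs a x).
Proof.
apply/forallP => j; apply/implyP => hj; rewrite ffunE.
case: pickP => [i /eqP h | _] //.
by rewrite -h mem_tnth in hj.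
Qed.

Lemma merge_restrict k (qs : k.-tuple 'I_N) x z :
  agr qs x z -> merge qs (restrict qs z) x = z.
Proof.
move/forallP => H; apply/ffunP => j; rewrite ffunE.
case: pickP => [i /eqP h | hn]; first by rewrite ffunE h.
have hj : j \notin qs.
  by apply/negP => /tnthP [i hi]; have := hn i; rewrite -hi eqxx.
by move/implyP: (H j) => /(_ hj) /eqP.
Qed.

Lemma merge_merge k (qs : k.-tuple 'I_N) a b x :
  merge qs b (merge qs a x) = merge qs b x.
Proof.
by apply/ffunP => j; rewrite !ffunE; case: pickP.
Qed.

Lemma agr_refl k (qs : k.-tuple 'I_N) x : agr qs x x.
Proof. by apply/forallP => j; rewrite eqxx implybT. Qed.

Lemma agr_sym k (qs : k.-tuple 'I_N) x y : agr qs x y = agr qs y x.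
Proof. by apply: eq_forallb => j; rewrite eq_sym. Qed.

Lemma agr_trans k (qs : k.-tuple 'I_N) x y z : agr qs x y -> agr qs y z -> agr qs x z.
Proof.
move=> /forallP h1 /forallP h2; apply/forallP => j; apply/implyP => hj.
by move/implyP: (h1 j) => /(_ hj) /eqP ->; move/implyP: (h2 j) => /(_ hj).
Qed.

Lemma sum_agr k (qs : k.-tuple 'I_N) x (h : B -> C) :
  uniq qs -> \sum_z (agr qs x z)%:R * h z = \sum_a h (merge qs a x).
Proof.
move=> uq.
transitivity (\sum_z \sum_a (z == merge qs a x)%:R * h z).
  apply: eq_bigr => z _; rewrite -mulr_suml; congr (_ * _).
  case: (boolP (agr qs x z)) => hz.
    rewrite (bigD1 (restrict qs z)) //= merge_restrict // eqxx big1 ?addr0 // => a ha.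
    case: eqP => // e; move: ha; by rewrite e restrict_merge // eqxx.
  rewrite big1 // => a _; case: eqP => // e; by rewrite e agr_merge in hz.
rewrite exchange_big; apply: eq_bigr => a _.
by rewrite (eq_bigr (fun z => (merge qs a x == z)%:R * h z)) ?sum_delta // => z _; rewrite eq_sym.
Qed.


Lemma liftopE k (qs : k.-tuple 'I_N) (A : op R (basis k)) x y :
  liftop qs A x y = A (restrict qs x) (restrict qs y) * (agr qs x y)%:R.
Proof. by []. Qed.

Lemma liftopM k (qs : k.-tuple 'I_N) (A1 A2 : op R (basis k)) :
  uniq qs -> opmul (liftop qs A1) (liftop qs A2) = liftop qs (opmul A1 A2).
Proof.
move=> uq; apply: opext => x y; rewrite /opmul liftopE.
transitivity (\sum_z (agr qs x z)%:R *
   (A1 (restrict qs x) (restrict qs z) * A2 (restrict qs z) (restrict qs y) *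
    (agr qs x y)%:R)).
  apply: eq_bigr => z _; rewrite !liftopE.
  case: (boolP (agr qs x z)) => hxz; last by rewrite /= !(mulr0, mul0r).
  have -> : agr qs z y = agr qs x y.
    apply/idP/idP => h; first exact: agr_trans hxz h.
    by apply: agr_trans h; rewrite agr_sym.
  by rewrite /=; ring.
rewrite sum_agr // mulr_suml; apply: eq_bigr => a _.
by rewrite !restrict_merge.
Qed.

Lemma liftop1 k (qs : k.-tuple 'I_N) : liftop qs (op1 R : op R (basis k)) = op1 R.
Proof.
apply: opext => x y; rewrite liftopE /op1.
case: (eqVneq x y) => [->|ne]; first by rewrite !eqxx agr_refl /= mulr1.
case h1: (restrict qs x == restrict qs y); last by rewrite mul0r.
case h2: (agr qs x y); last by rewrite mulr0.
move/eqP: h1 => h1; have := merge_restrict h2; rewrite -h1.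
by rewrite merge_restrict ?agr_refl // => e; rewrite e eqxx in ne.
Qed.

Lemma adj_liftop k (qs : k.-tuple 'I_N) (A : op R (basis k)) :
  adj (liftop qs A) = liftop qs (adj A).
Proof.
apply: opext => x y; rewrite /adj !liftopE rmorphM /= conjC_nat.
by rewrite agr_sym.
Qed.

Lemma liftop_add k (qs : k.-tuple 'I_N) (A1 A2 : op R (basis k)) :
  liftop qs (opadd A1 A2) = opadd (liftop qs A1) (liftop qs A2).
Proof. by apply: opext => x y; rewrite /liftop /opadd mulrDl. Qed.

Lemma sum_b1 (j : bool) : \sum_(z : basis 1) ((z ord0 == j)%:R : C) = 1.
Proof.
rewrite (eq_bigr (fun z => ([ffun=> j] == z)%:R * 1)).
  by rewrite sum_delta.
move=> z _; rewrite mulr1.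
have -> : (z ord0 == j) = ([ffun=> j] == z) => //.
apply/eqP/eqP => [<-|<-]; last by rewrite ffunE.
by apply/ffunP => i; rewrite ffunE (ord1 i).
Qed.

Lemma ketbraM i j l : opmul (@ketbra R i j) (ketbra R j l) = ketbra R i l.
Proof.
apply: opext => a b; rewrite /opmul /ketbra.
rewrite (eq_bigr (fun z : basis 1 => ((a ord0 == i) && (b ord0 == l))%:R *
   ((z ord0 == j)%:R : C))); first by rewrite -mulr_sumr sum_b1 mulr1.
move=> z _.
by case: (a ord0 == i); case: (b ord0 == l); case: (z ord0 == j); rewrite /= ?mulr0 ?mul0r ?mulr1 ?mul1r.
Qed.

Lemma ketbra1 : opadd (@ketbra R false false) (ketbra R true true) = op1 R.
Proof.
apply: opext => a b; rewrite /opadd /ketbra /op1.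
have -> : (a == b) = (a ord0 == b ord0).
  apply/eqP/eqP => [->//|h]; apply/ffunP => i; by rewrite (ord1 i).
by case: (a ord0); case: (b ord0); rewrite /= ?addr0 ?add0r.
Qed.

Lemma adj_ketbra i j : adj (@ketbra R i j) = ketbra R j i.
Proof. by apply: opext => a b; rewrite /adj /ketbra conjC_nat andbC. Qed.

Lemma tr_add (I : finType) (A1 A2 : op R I) : trace (opadd A1 A2) = trace A1 + trace A2.
Proof. by rewrite /trace -big_split. Qed.

Lemma tr_cyc (I : finType) (A rho A' : op R I) :
  trace (opmul A (opmul rho A')) = trace (opmul (opmul A' A) rho).
Proof.
rewrite /trace /opmul.
transitivity (\sum_x \sum_z \sum_w A x z * rho z w * A' w x).
  by apply: eq_bigr => x _; apply: eq_bigr => z _; rewrite mulr_sumr; apply: eq_bigr => w _; ring.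
symmetry.
transitivity (\sum_w \sum_x \sum_z A x z * rho z w * A' w x).
  apply: eq_bigr => w _; under eq_bigr => z _ do rewrite mulr_suml.
  by rewrite exchange_big; apply: eq_bigr => x _; apply: eq_bigr => z _ /=; ring.
rewrite exchange_big; apply: eq_bigr => x _; by rewrite exchange_big.
Qed.

Lemma tr_op1 (I : finType) (rho : op R I) : trace (opmul (op1 R) rho) = trace rho.
Proof. by rewrite /trace /opmul; apply: eq_bigr => x _; rewrite /op1 sum_delta. Qed.

Lemma tr_conj2 (I : finType) (A1 A1' A2 A2' : op R I) rho :
  opadd (opmul A1' A1) (opmul A2' A2) = op1 R ->
  trace (opadd (opmul A1 (opmul rho A1')) (opmul A2 (opmul rho A2'))) = trace rho.
Proof.
move=> h.
transitivity (trace (opmul (opadd (opmul A1' A1) (opmul A2' A2)) rho)); last by rewrite h tr_op1.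
rewrite tr_add !tr_cyc /trace -big_split; apply: eq_bigr => x _.
rewrite /opmul /opadd /= -big_split; apply: eq_bigr => z _ /=; by rewrite mulrDl.
Qed.

Definition tp (I : finType) (M : op R I -> op R I) := forall rho, trace (M rho) = trace rho.

Lemma kbE (q : 'I_N) i j : kb R q i j = liftop [tuple q] (ketbra R i j).
Proof. by []. Qed.

Lemma uniq1 (q : 'I_N) : uniq [tuple q].
Proof. by []. Qed.

Lemma tp_init (q : 'I_N) : tp (init_map q).
Proof.
move=> rho; rewrite /init_map; apply: tr_conj2.
rewrite !kbE !liftopM ?uniq1 // !ketbraM -liftop_add ketbra1; exact: liftop1.
Qed.

Lemma tp_meas (q : 'I_N) (rho : op R B) : trace (opadd (meas_map q false rho) (meas_map q true rho)) = trace rho.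
Proof.
rewrite /meas_map; apply: tr_conj2.
rewrite !kbE !liftopM ?uniq1 // !ketbraM -liftop_add ketbra1; exact: liftop1.
Qed.

Lemma tp_unit k (qs : k.-tuple 'I_N) U : uniq qs -> unitary U -> tp (unit_map qs U).
Proof.
move=> uq [_ hU] rho; rewrite /unit_map tr_cyc adj_liftop liftopM // hU liftop1.
exact: tr_op1.
Qed.


Lemma card_basis_gt0 k : (0 < #|{: basis k}|)%N.
Proof. by apply/card_gt0P; exists [ffun=> false]. Qed.

Lemma tp_liftmap k (qs : k.-tuple 'I_N) (E : op R (basis k) -> op R (basis k)) :
  uniq qs -> trace_preserving E -> tp (liftmap qs E).
Proof.
move=> uq hE rho.
pose blk (x : B) : op R (basis k) := fun a b => rho (merge qs a x) (merge qs b x).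
pose c : C := (#|{: basis k}|)%:R.
have hc : forall z, \sum_x (agr qs x z)%:R = c.
  move=> z; rewrite (eq_bigr (fun x => (agr qs z x)%:R * 1)); last first.
    by move=> x _; rewrite mulr1 agr_sym.
  by rewrite sum_agr // sumr_const.
have key : forall F : B -> C, \sum_x \sum_z (agr qs x z)%:R * F z = c * \sum_z F z.
  move=> F; rewrite exchange_big mulr_sumr; apply: eq_bigr => z _.
  by rewrite -mulr_suml hc.
have e1 : c * trace (liftmap qs E rho) = \sum_x trace (E (blk x)).
  rewrite /trace -key; apply: eq_bigr => x _; rewrite sum_agr //; apply: eq_bigr => a _.
  rewrite /liftmap restrict_merge //.
  have -> : (fun a' b' => rho (merge qs a' (merge qs a x)) (merge qs b' (merge qs a x))) = blk x.
    by apply: opext => a' b'; rewrite !merge_merge.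
  by [].
have e2 : c * trace rho = \sum_x trace (blk x).
  by rewrite /trace -key; apply: eq_bigr => x _; rewrite sum_agr.
have : c * trace (liftmap qs E rho) = c * trace rho.
  by rewrite e1 e2; apply: eq_bigr => x _; exact: hE.
apply: mulfI; rewrite pnatr_eq0 -lt0n; exact: card_basis_gt0.
Qed.

Lemma lin_conj (I : finType) (A A' : op R I) :
  linear_map (fun rho => opmul A (opmul rho A')).
Proof.
move=> a X Y; apply: opext => x y; rewrite /opmul /opadd /opscale /=.
rewrite mulr_sumr -big_split; apply: eq_bigr => z _ /=.
rewrite [a * _]mulrCA -mulrDr; congr (_ * _).
rewrite mulr_sumr -big_split; apply: eq_bigr => w _ /=; ring.
Qed.

Lemma lin_add (I : finType) (M1 M2 : op R I -> op R I) :
  linear_map M1 -> linear_map M2 -> linear_map (fun rho => opadd (M1 rho) (M2 rho)).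
Proof.
move=> h1 h2 a X Y; rewrite h1 h2; apply: opext => x y; rewrite /opadd /opscale /=; ring.
Qed.

Lemma lin_comp (I : finType) (M1 M2 : op R I -> op R I) :
  linear_map M1 -> linear_map M2 -> linear_map (M1 \o M2).
Proof. by move=> h1 h2 a X Y /=; rewrite h2 h1. Qed.

Lemma lin_id (I : finType) : linear_map (@id (op R I)).
Proof. by []. Qed.

Lemma lin_zero (I : finType) : linear_map (fun _ : op R I => (op0 R : op R I)).
Proof. by move=> a X Y; apply: opext => x y; rewrite /opadd /opscale /op0 mulr0 addr0. Qed.

Lemma lin_liftmap k (qs : k.-tuple 'I_N) (E : op R (basis k) -> op R (basis k)) :
  linear_map E -> linear_map (liftmap qs E).
Proof.
move=> hE a X Y; apply: opext => x y.
have := hE a (fun a' b' => X (merge qs a' x) (merge qs b' y))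
             (fun a' b' => Y (merge qs a' x) (merge qs b' y)).
by move/(congr1 (fun M => M (restrict qs x) (restrict qs y))).
Qed.

Lemma cp_liftmap k (qs : k.-tuple 'I_N) (E : op R (basis k) -> op R (basis k)) :
  completely_positive E -> completely_positive (liftmap qs E).
Proof.
move=> hE m X hX.
pose T := (B * 'I_m)%type.
pose g (u : (basis k * 'I_#|{: T}|)%type) : T :=
  (merge qs u.1 (enum_val u.2).1, (enum_val u.2).2).
pose Y : op R (basis k * 'I_#|{: T}|)%type := fun u w => X (g u) (g w).
have hY : psd Y := psd_pull g hX.
have := psd_pull (fun p : T => (restrict qs p.1, enum_rank p)) (hE _ Y hY).
apply: psd_ext => p q; rewrite /ampl /liftmap /Y /g /= !enum_rankK.
by case: p; case: q.
Qed.

End D.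

Section F1.
Variable R : realType.
Notation C := (R[i]).
Variable I : finType.

Definition sesq (A : op R I) (u v : I -> C) := \sum_a \sum_b (u a)^* * A a b * v b.
Definition ev (x : I) : I -> C := fun z => (z == x)%:R.
Definition wv (x y : I) (c : C) : I -> C := fun z => ev x z + c * ev y z.

Lemma sesq_ev (A : op R I) x y : sesq A (ev x) (ev y) = A x y.
Proof.
rewrite /sesq /ev (eq_bigr (fun a => (x == a)%:R * \sum_b A a b * (y == b)%:R)).
  by rewrite sum_delta sum_deltar.
move=> a _; rewrite mulr_sumr; apply: eq_bigr => b _.
by rewrite conjC_nat eq_sym [(b == y)]eq_sym mulrA.
Qed.

Lemma quad_wv (A : op R I) u v c :
  sesq A (fun z => u z + c * v z) (fun z => u z + c * v z) =
  sesq A u u + c * sesq A u v + c^* * sesq A v u + c^* * c * sesq A v v.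
Proof.
rewrite /sesq !mulr_sumr -!big_split; apply: eq_bigr => a _ /=.
rewrite !mulr_sumr -!big_split; apply: eq_bigr => b _ /=.
rewrite rmorphD rmorphM /=; ring.
Qed.

Lemma qvE (A : op R I) x y c :
  sesq A (wv x y c) (wv x y c) = A x x + c * A x y + c^* * A y x + c^* * c * A y y.
Proof. by rewrite /wv quad_wv !sesq_ev. Qed.

Definition cs (i : 'I_4) : C := nth 0 [:: 1; -1; 'i; -'i] i.

Lemma cs_norm i : (cs i)^* * cs i = 1.
Proof.
have h : ('i : C) ^+ 2 = -1 by rewrite sqrCi.
case: i => [[|[|[|[|m]]]] hm] //; rewrite /cs /= ?rmorph1 ?rmorphN1 ?mulr1 ?mulrNN ?mulr1 //.
  by rewrite conjCi; ring: h.
by rewrite raddfN /= conjCi; ring: h.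
Qed.

Lemma polar_out (A : op R I) x y :
  A x y = \sum_(i < 4) ((cs i)^* / 4) * sesq A (wv x y (cs i)) (wv x y (cs i)).
Proof.
have h : ('i : C) ^+ 2 = -1 by rewrite sqrCi.
rewrite !big_ord_recr big_ord0 /= !qvE /cs /=.
rewrite ?rmorph1 ?rmorphN1 ?rmorphN ?conjCi.
rewrite /= ?conjCi ?opprK. by field: h.
Qed.

Definition rk1 (u : I -> C) : op R I := fun x y => u x * (u y)^*.

Lemma psd_rk1 u : psd (rk1 u).
Proof.
move=> v.
have -> : \sum_x \sum_y (v x)^* * rk1 u x y * v y =
   (\sum_x (v x)^* * u x) * (\sum_x (v x)^* * u x)^*.
  rewrite mulr_suml; apply: eq_bigr => x _; rewrite rmorph_sum mulr_sumr; apply: eq_bigr => y _.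
  by rewrite rmorphM /= conjCK /rk1; ring.
exact: mul_conjC_ge0.
Qed.

Lemma polar_in (a b x y : I) :
  ((x == a)%:R * (y == b)%:R : C) =
  \sum_(i < 4) (cs i / 4) * rk1 (wv a b (cs i)) x y.
Proof.
have h : ('i : C) ^+ 2 = -1 by rewrite sqrCi.
rewrite !big_ord_recr big_ord0 /= /rk1 /wv /ev /cs /=.
rewrite !rmorphD !rmorphM /= !conjC_nat ?rmorph1 ?rmorphN1 ?rmorphN ?conjCi.
rewrite /= ?conjCi ?opprK. by field: h.
Qed.


Lemma psd_diag (A : op R I) x : psd A -> 0 <= A x x.
Proof. by move=> hA; move: (hA (ev x)); rewrite -/(sesq A (ev x) (ev x)) sesq_ev. Qed.

Lemma psd_sesq (A : op R I) u : psd A -> 0 <= sesq A u u.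
Proof. by move=> hA; exact: hA u. Qed.

Lemma diag_le_tr (A : op R I) x : psd A -> A x x <= trace A.
Proof.
move=> hA; rewrite /trace (bigD1 x) //= lerDl.
by apply: sumr_ge0 => y _; exact: psd_diag.
Qed.

Lemma tr_ge0 (A : op R I) : psd A -> 0 <= trace A.
Proof. by move=> hA; apply: sumr_ge0 => x _; exact: psd_diag. Qed.

Lemma qv_le (A : op R I) x y c : psd A -> c^* * c = 1 ->
  sesq A (wv x y c) (wv x y c) <= 4 * trace A.
Proof.
move=> hA hc.
have e : sesq A (wv x y c) (wv x y c) + sesq A (wv x y (- c)) (wv x y (- c)) =
   2 * A x x + 2 * A y y.
  by rewrite !qvE raddfN /=; ring: hc.
apply: (@le_trans _ _ (2 * A x x + 2 * A y y)).
  by rewrite -e lerDl; apply: psd_sesq.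
have -> : 4 * trace A = 2 * trace A + 2 * trace A by ring.
by apply: lerD; rewrite ler_wpM2l // diag_le_tr.
Qed.

Lemma lin_op0 (M : op R I -> op R I) : linear_map M -> M (op0 R) = op0 R.
Proof.
move=> hM.
have e : opadd (opscale (-1) (op0 R)) (op0 R) = op0 R :> op R I.
  by apply: opext => x y; rewrite /opadd /opscale /op0 mulr0 addr0.
have := hM (-1) (op0 R) (op0 R); rewrite e => h.
apply: opext => x y; rewrite {1}h /opadd /opscale /op0; ring.
Qed.

Lemma lin_sum (K : Type) (ks : seq K) (M : op R I -> op R I) (coef : K -> C)
  (A : K -> op R I) : linear_map M ->
  M (fun x y => \sum_(k <- ks) coef k * A k x y) =
  (fun x y => \sum_(k <- ks) coef k * M (A k) x y).
Proof.
move=> hM; elim: ks => [|k ks IH].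
  have e : (fun x y : I => \sum_(k <- [::]) coef k * A k x y) = op0 R.
    by apply: opext => x y; rewrite big_nil.
  rewrite e lin_op0 //; apply: opext => x y; by rewrite big_nil.
have e : (fun x y : I => \sum_(j <- k :: ks) coef j * A j x y) =
   opadd (opscale (coef k) (A k)) (fun x y => \sum_(j <- ks) coef j * A j x y).
  by apply: opext => x y; rewrite big_cons.
rewrite e hM IH; apply: opext => x y; by rewrite big_cons.
Qed.

End F1.

Section F2.
Variable R : realType.
Notation C := (R[i]).
Variable N : nat.
Notation B := (basis N).

Lemma hs_has_sum (f : seq bool -> op R B) (L : op R B) :
  (forall x y, hs (fun p => f p x y) (L x y)) -> has_sum f L.
Proof.
move=> H eps e0.
case: (@hs_common R _ (B * B)%type (fun j p => f p j.1 j.2) (fun j => L j.1 j.2)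
         (fun j => H j.1 j.2) eps e0) => s0 Hs.
by exists s0 => s us sub x y; exact: (Hs s us sub (x, y)).
Qed.

Lemma has_sum_hs (f : seq bool -> op R B) (L : op R B) x y :
  has_sum f L -> hs (fun p => f p x y) (L x y).
Proof. by move=> H eps e0; case: (H eps e0) => s0 Hs; exists s0 => s us sub; exact: Hs. Qed.

Lemma decomp (rho : op R B) :
  rho = fun x y => \sum_(k : (B * B * 'I_4)%type)
     (rho k.1.1 k.1.2 * cs R k.2 / 4) * rk1 (wv k.1.1 k.1.2 (cs R k.2)) x y.
Proof.
apply: opext => x y; rewrite sum_pair sum_pair /=.
transitivity (\sum_a \sum_b rho a b * ((x == a)%:R * (y == b)%:R)).
  rewrite (eq_bigr (fun a => (x == a)%:R * \sum_b (y == b)%:R * rho a b)).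
    by rewrite sum_delta sum_delta.
  move=> a _; rewrite mulr_sumr; apply: eq_bigr => b _; ring.
apply: eq_bigr => a _; apply: eq_bigr => b _.
rewrite polar_in mulr_sumr; apply: eq_bigr => i _; ring.
Qed.

Variable F : seq bool -> op R B -> op R B.
Hypothesis hlin : forall p, linear_map (F p).
Hypothesis hcp : forall p, completely_positive (F p).
Hypothesis hbud : forall rho, psd rho -> forall s, uniq s ->
  \sum_(p <- s) trace (F p rho) <= trace rho.

Lemma ex_psd rho : psd rho -> exists L, has_sum (fun p => F p rho) L.
Proof.
move=> hr.
have hq : forall j : (B * B * 'I_4)%type, exists l,
    hs (fun p => sesq (F p rho) (wv j.1.1 j.1.2 (cs R j.2)) (wv j.1.1 j.1.2 (cs R j.2))) l.
  move=> [[x y] i]; apply: (@hs_nonneg R _ _ (4 * trace rho)).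
    by move=> p; apply: psd_sesq; apply: cp_psd.
  move=> s us; apply: (@le_trans _ _ (\sum_(p <- s) 4 * trace (F p rho))).
    apply: ler_sum => p _; apply: qv_le; [exact: cp_psd | exact: cs_norm].
  by rewrite -mulr_sumr ler_wpM2l //; apply: hbud.
pose l j := proj1_sig (constructive_indefinite_description _ (hq j)).
have hl j : hs (fun p => sesq (F p rho) (wv j.1.1 j.1.2 (cs R j.2)) (wv j.1.1 j.1.2 (cs R j.2))) (l j).
  exact: proj2_sig (constructive_indefinite_description _ (hq j)).
exists (fun x y => \sum_(i < 4) ((cs R i)^* / 4) * l (x, y, i)).
apply: hs_has_sum => x y.
apply: hs_ext (@hs_sum _ _ _ (index_enum 'I_4)
   (fun (i : 'I_4) (p : seq bool) => ((cs R i)^* / 4) * sesq (F p rho) (wv x y (cs R i)) (wv x y (cs R i)))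
   (fun i => ((cs R i)^* / 4) * l (x, y, i)) (fun i => hs_scale _ (hl (x, y, i)))) => p.
by rewrite -polar_out.
Qed.

Lemma ex_all rho : exists L, has_sum (fun p => F p rho) L.
Proof.
pose K := (B * B * 'I_4)%type.
pose P (k : K) := rk1 (wv k.1.1 k.1.2 (cs R k.2)).
pose coef (k : K) := rho k.1.1 k.1.2 * cs R k.2 / 4.
have hP : forall k, exists L, has_sum (fun p => F p (P k)) L.
  by move=> k; apply: ex_psd; apply: psd_rk1.
pose Lk k := proj1_sig (constructive_indefinite_description _ (hP k)).
have hLk k : has_sum (fun p => F p (P k)) (Lk k).
  exact: proj2_sig (constructive_indefinite_description _ (hP k)).
exists (fun x y => \sum_(k : K) coef k * Lk k x y).
apply: hs_has_sum => x y.
apply: hs_ext (@hs_sum _ _ _ (index_enum K) (fun (k : K) (p : seq bool) => coef k * F p (P k) x y)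
   (fun k => coef k * Lk k x y) (fun k => hs_scale _ (has_sum_hs x y (hLk k)))) => p.
by rewrite [in RHS](decomp rho) lin_sum.
Qed.

Theorem abstract_channel : exists E : op R B -> op R B,
    [/\ (forall rho, has_sum (fun p => F p rho) (E rho)),
        linear_map E,
        completely_positive E &
        (forall rho, psd rho -> trace (E rho) <= trace rho)].
Proof.
pose E rho := proj1_sig (constructive_indefinite_description _ (ex_all rho)).
have hE rho : has_sum (fun p => F p rho) (E rho).
  exact: proj2_sig (constructive_indefinite_description _ (ex_all rho)).
exists E; split => //.
- move=> a X Y; apply: opext => x y.
  apply: (hs_unique (has_sum_hs x y (hE (opadd (opscale a X) Y)))).
  rewrite /opadd /opscale.
  apply: hs_ext (hs_add (hs_scale a (has_sum_hs x y (hE X))) (has_sum_hs x y (hE Y))) => p.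
  by rewrite hlin.
- move=> k X hX v.
  have hh : hs (fun t => \sum_p \sum_q (v p)^* * ampl (F t) X p q * v q)
               (\sum_p \sum_q (v p)^* * ampl E X p q * v q).
    apply: (@hs_sum _ _ _ (index_enum _) (fun p (t : seq bool) => \sum_q (v p)^* * ampl (F t) X p q * v q)
                (fun p => \sum_q (v p)^* * ampl E X p q * v q)) => p.
    apply: (@hs_sum _ _ _ (index_enum _) (fun q (t : seq bool) => (v p)^* * ampl (F t) X p q * v q)
                (fun q => (v p)^* * ampl E X p q * v q)) => q.
    have -> : (v p)^* * ampl E X p q * v q =
       ((v p)^* * v q) * E (fun a b => X (a, p.2) (b, q.2)) p.1 q.1 by rewrite /ampl; ring.
    apply: hs_ext (hs_scale ((v p)^* * v q) (has_sum_hs p.1 q.1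
       (hE (fun a b => X (a, p.2) (b, q.2))))) => t.
    rewrite /ampl; ring.
  apply: ge0_closed => eps e0; case: (hh _ e0) => s0 Hs.
  exists (\sum_(t <- undup s0) \sum_p \sum_q (v p)^* * ampl (F t) X p q * v q); split.
    by apply: sumr_ge0 => t _; exact: (hcp t hX v).
  rewrite distrC; apply: Hs; first exact: undup_uniq.
  by move=> z hz; rewrite mem_undup.
- move=> rho hr; rewrite -subr_ge0.
  have ht : hs (fun t => trace (F t rho)) (trace (E rho)).
    exact: (@hs_sum _ _ _ (index_enum B) (fun x (t : seq bool) => F t rho x x) (fun x => E rho x x)
                   (fun x => has_sum_hs x x (hE rho))).
  apply: ge0_closed => eps e0; case: (ht _ e0) => s0 Hs.
  exists (trace rho - \sum_(t <- undup s0) trace (F t rho)); split.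
    by rewrite subr_ge0; apply: hbud => //; exact: undup_uniq.
  have -> : trace rho - trace (E rho) - (trace rho - \sum_(t <- undup s0) trace (F t rho)) =
     \sum_(t <- undup s0) trace (F t rho) - trace (E rho) by ring.
  apply: Hs; first exact: undup_uniq.
  by move=> z hz; rewrite mem_undup.
Qed.

End F2.

Section E1.
Variable R : realType.
Notation C := (R[i]).
Variable N : nat.
Notation B := (basis N).

Fixpoint wfq (P : prog R N) : Prop :=
  match P with
  | PSeq S1 S2 => wfq S1 /\ wfq S2
  | PUnit k qs U => uniq qs /\ unitary U
  | PIf _ S1 S2 => wfq S1 /\ wfq S2
  | PRepeat P _ => wfq P
  | _ => True
  end.

Lemma wf_wfq P : wf_prog P -> wfq P.
Proof. elim: P => /=; intros; tauto. Qed.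

Lemma wfq_pseq S1 S2 : wfq S1 -> wfq S2 -> wfq (pseq S1 S2).
Proof. by case: S1 => //=. Qed.

Lemma wfq_meas_cont P : wfq P -> wfq (meas_cont P).
Proof. elim: P => //= S1 IH1 S2 _ [h1 h2]; exact: wfq_pseq (IH1 h1) h2. Qed.

Definition good (M : op R B -> op R B) :=
  [/\ linear_map M, completely_positive M & tp M].

Lemma adj_kb (q : 'I_N) i j : adj (kb R q i j) = kb R q j i.
Proof. by rewrite kbE adj_liftop adj_ketbra. Qed.

Lemma good_init (q : 'I_N) : good (init_map q).
Proof.
split.
- exact: (lin_add (lin_conj (kb R q false false) (kb R q false false))
                  (lin_conj (kb R q false true) (kb R q true false))).
- have := cp_add (cp_conj (kb R q false false)) (cp_conj (kb R q false true)).
  by rewrite !adj_kb.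
- exact: tp_init.
Qed.

Lemma lin_meas (q : 'I_N) c : linear_map (@meas_map R N q c).
Proof. exact: (lin_conj (kb R q c c) (kb R q c c)). Qed.

Lemma cp_meas (q : 'I_N) c : completely_positive (@meas_map R N q c).
Proof. by have := cp_conj (kb R q c c); rewrite adj_kb. Qed.

Lemma good_unit k (qs : k.-tuple 'I_N) U : uniq qs -> unitary U -> good (unit_map qs U).
Proof.
move=> uq hU; split.
- exact: (lin_conj (liftop qs U) (adj (liftop qs U))).
- exact: cp_conj.
- exact: tp_unit.
Qed.

Lemma good_id : good id.
Proof. by split; [exact: lin_id | exact: cp_id | move=> rho]. Qed.

Lemma good_local k (qs : k.-tuple 'I_N) M : uniq qs -> local_cptp qs M -> good M.
Proof.
move=> uq [E [hl hc ht ->]]; split.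
- exact: lin_liftmap.
- exact: cp_liftmap.
- exact: tp_liftmap.
Qed.

Lemma step_good S s S' s' M f :
  step1 S s S' s' M f -> wfq S -> wfq S' /\ good M.
Proof.
elim => {S s S' s' M f} /=.
- by move=> q s _; split => //; exact: good_init.
- by move=> q s M hM _; split => //; exact: good_local hM.
- by move=> k qs U s [uq hU]; split => //; exact: good_unit.
- by move=> k qs U s M hM [uq _]; split => //; exact: good_local hM.
- by move=> *; split => //; exact: good_id.
- by move=> *; split => //; exact: good_id.
- by move=> b S1 S2 s _ [h1 _]; split => //; exact: good_id.
- by move=> b S1 S2 s _ [_ h2]; split => //; exact: good_id.
- by move=> P b s h; split => //; exact: good_id.
- move=> S1 S2 s S1' s' M f _ IH [h1 h2].
  have [h1' g] := IH h1; split => //; exact: wfq_pseq.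
Qed.

End E1.

Section E2.
Variable R : realType.
Notation C := (R[i]).
Variable N : nat.
Notation B := (basis N).
Variables (r : nat) (S0 : prog R N) (s0 : cstate) (t : tree R N).
Hypothesis hwf : wf_prog S0.
Hypothesis ht : is_fault_tree r S0 s0 t.

Lemma node_inv p n : t p = Some n ->
  [/\ wfq (nprog n), linear_map (nq n) & completely_positive (nq n)].
Proof.
case: ht => hroot hnone hnode _.
elim/last_ind: p n => [|p b IH] n.
  by rewrite hroot => [[<-]] /=; split; [exact: wf_wfq | exact: lin_id | exact: cp_id].
move=> hn; case e: (t p) => [n'|]; last by rewrite hnone in hn.
have [w' l' c'] := IH _ e.
have := hnode p n' e; case: ifP => hl.
  by move=> /(_ b); rewrite hn.
case hm: (head_meas (nprog n')) => [[x q]|].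
  case=> [hid | [M0 [M1 [h0 h1 htr hc]]]].
    rewrite hid in hn; case: hn => <- /=; split.
    - exact: wfq_meas_cont.
    - exact: lin_comp (lin_meas _ _) l'.
    - exact: cp_comp (cp_meas _ _) c'.
  rewrite hc in hn; case: hn => <- /=; split.
  - exact: wfq_meas_cont.
  - case: b; [case: h1 => E [hE _ ->] | case: h0 => E [hE _ ->]];
      exact: lin_comp (lin_liftmap _ hE) l'.
  - case: b; [case: h1 => E [_ hE ->] | case: h0 => E [_ hE ->]];
      exact: cp_comp (cp_liftmap _ hE) c'.
case=> hnt [n'' [hn'' [M [hs hq]]]].
case: b hn => hn; first by rewrite hnt in hn.
rewrite hn'' in hn; case: hn => <-.
have [w2 [gl gc _]] := step_good hs w'.
rewrite hq; split => //; [exact: lin_comp | exact: cp_comp].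
Qed.

Lemma tr_op0 (I : finType) : trace (op0 R : op R I) = 0.
Proof. by rewrite /trace big1. Qed.

Variable rho : op R B.

Definition trn p := if t p is Some n then trace (nq n rho) else 0.
Definition leaftr p := trace (leafval t rho p).

Lemma cons_step p : trn (rcons p false) + trn (rcons p true) = trn p - leaftr p.
Proof.
case: ht => hroot hnone hnode _.
rewrite /trn /leaftr /leafval; case e: (t p) => [n|]; last first.
  by rewrite !hnone // tr_op0 addr0 subr0.
have [w l c] := node_inv e.
have := hnode p n e; case: ifP => hl.
  by move=> h; rewrite !h subrr addr0.
rewrite tr_op0 subr0.
case hm: (head_meas (nprog n)) => [[x q]|].
  case=> [hid | [M0 [M1 [h0 h1 htr hc]]]].
    by rewrite !hid /= -tr_add tp_meas.
  by rewrite !hc /= -tr_add htr.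
case=> hnt [n'' [hn'' [M [hs hq]]]].
have [_ [_ _ gt]] := step_good hs w.
by rewrite hnt hn'' hq /= gt addr0.
Qed.

Fixpoint paths (k : nat) : seq (seq bool) :=
  if k is k'.+1 then [seq rcons p b | p <- paths k', b <- [:: false; true]]
  else [:: [::]].

Lemma mem_paths k p : (p \in paths k) = (size p == k).
Proof.
elim: k p => [|k IH] p.
  by rewrite inE size_eq0.
apply/idP/idP => [/allpairsPdep [q [b [hq hb ->]]]|].
  by rewrite size_rcons eqSS -IH.
case/lastP: p => [//|q b]; rewrite size_rcons eqSS => hq.
by apply/allpairsPdep; exists q, b; rewrite IH hq; split => //; case: b.
Qed.

Lemma uniq_paths k : uniq (paths k).
Proof.
elim: k => [//|k IH].
apply: (@allpairs_uniq _ _ _ (fun p b => rcons p b)) => //.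
by move=> [p1 b1] [p2 b2] _ _ /= /rcons_inj [-> ->].
Qed.

Definition Wsum k := \sum_(p <- paths k) trn p.
Definition Lsum k := \sum_(p <- paths k) leaftr p.

Lemma W_step k : Wsum k.+1 = Wsum k - Lsum k.
Proof.
rewrite /Wsum /Lsum; change (paths k.+1) with [seq rcons p b | p <- paths k, b <- [:: false; true]].
rewrite big_allpairs_dep -sumrB; apply: eq_bigr => p _.
by rewrite big_cons big_cons big_nil /= addr0 cons_step.
Qed.

Lemma W_sum d : \sum_(k < d) Lsum k + Wsum d = trace rho.
Proof.
case: ht => hroot _ _ _.
elim: d => [|d IH].
  by rewrite big_ord0 add0r /Wsum /= big_cons big_nil addr0 /trn hroot.
by rewrite big_ord_recr /= W_step -IH; ring.
Qed.

Hypothesis hr : psd rho.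

Lemma trn_ge0 p : 0 <= trn p.
Proof.
rewrite /trn; case e: (t p) => [n|//].
have [_ _ c] := node_inv e; exact: tr_ge0 (cp_psd c hr).
Qed.

Lemma lt_ge0 p : 0 <= leaftr p.
Proof.
rewrite /leaftr /leafval; case e: (t p) => [n|]; last by rewrite tr_op0.
case: ifP => _; last by rewrite tr_op0.
have [_ _ c] := node_inv e; exact: tr_ge0 (cp_psd c hr).
Qed.

Lemma budget s : uniq s -> \sum_(p <- s) leaftr p <= trace rho.
Proof.
move=> us.
pose d := (\max_(p <- s) size p).+1.
have hd : forall p, p \in s -> (size p < d)%N.
  by move=> p hp; rewrite ltnS; apply: leq_bigmax_seq.
have e1 : \sum_(p <- s) leaftr p = \sum_(p <- s) \sum_(k < d) ((size p == k)%:R * leaftr p).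
  apply: eq_big_seq => p hp.
  have hpd := hd p hp.
  rewrite (eq_bigr (fun k : 'I_d => (Ordinal hpd == k)%:R * leaftr p)) ?sum_delta //.
rewrite e1 exchange_big /=.
apply: (@le_trans _ _ (\sum_(k < d) Lsum k)).
  apply: ler_sum => k _.
  have -> : \sum_(p <- s) (size p == k)%:R * leaftr p = \sum_(p <- [seq p <- s | size p == k]) leaftr p.
    rewrite big_filter [RHS]big_mkcond; apply: eq_bigr => p _.
    by case: (size p == k); rewrite ?mul1r ?mul0r.
  apply: sum_sub_le; first exact: lt_ge0.
  - exact: filter_uniq.
  - exact: uniq_paths.
  by move=> p; rewrite mem_filter mem_paths => /andP [].
by rewrite -(W_sum d) lerDl; apply: sumr_ge0 => p _; exact: trn_ge0.
Qed.

End E2.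

Unset Implicit Arguments.

Theorem proposition1 (R : realType) (N : nat) (S0 : prog R N) (s0 : cstate)
  (r : nat) (t : tree R N) :
  wf_prog S0 -> is_fault_tree r S0 s0 t ->
  exists E : op R (basis N) -> op R (basis N),
    [/\ (forall rho, has_sum (leafval t rho) (E rho)),
        linear_map E,
        completely_positive E &
        (forall rho, psd rho -> trace (E rho) <= trace rho)].
Proof.
move=> hwf ht.
have hlin : forall p, linear_map (fun rho => leafval t rho p).
  move=> p; case e: (t p) => [n|].
    case hl: (is_leaf n).
      have -> : (fun rho => leafval t rho p) = nq n.
        by apply: functional_extensionality => rho; rewrite /leafval e hl.
      by have [_ l _] := node_inv hwf ht e.
    have -> : (fun rho => leafval t rho p) = (fun _ => op0 R).
      by apply: functional_extensionality => rho; rewrite /leafval e hl.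
    exact: lin_zero.
  have -> : (fun rho => leafval t rho p) = (fun _ => op0 R).
    by apply: functional_extensionality => rho; rewrite /leafval e.
  exact: lin_zero.
have hcp : forall p, completely_positive (fun rho => leafval t rho p).
  move=> p; case e: (t p) => [n|].
    case hl: (is_leaf n).
      have -> : (fun rho => leafval t rho p) = nq n.
        by apply: functional_extensionality => rho; rewrite /leafval e hl.
      by have [_ _ c] := node_inv hwf ht e.
    have -> : (fun rho => leafval t rho p) = (fun _ => op0 R).
      by apply: functional_extensionality => rho; rewrite /leafval e hl.
    exact: cp_zero.
  have -> : (fun rho => leafval t rho p) = (fun _ => op0 R).
    by apply: functional_extensionality => rho; rewrite /leafval e.
  exact: cp_zero.
have hbud : forall rho, psd rho -> forall s, uniq s ->
    \sum_(p <- s) trace (leafval t rho p) <= trace rho.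
  by move=> rho hr s us; exact: (budget hwf ht hr us).
exact: (abstract_channel hlin hcp hbud).
Qed.
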